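(* Let $\mathcal{F}=\widetilde{M}$ be an indecomposable coherent sheaf on $\mathbb{A}^1=\operatorname{MSpec}(\langle t\rangle)$, and let $U=\operatorname{MSpec}(\langle t,t^{-1}\rangle)\subset\mathbb{A}^1$ be the open subset where $t$ is invertible. Then: (1) if $\Gamma_M$ is of type 1, $\mathcal{F}|_U\cong 0$; (2) if $\Gamma_M$ is of type 2, $\mathcal{F}|_U\cong\mathcal{L}$; (3) if $\Gamma_M$ is of type 3 with oriented cycle of length $k$, $\mathcal{F}|_U\cong\mathcal{C}_k$.
   Context: $\langle t\rangle=\{0,1,t,t^2,\dots\}$ and $\langle t,t^{-1}\rangle=\{0\}\cup\{t^n:n\in\mathbb Z\}$. A module over such a monoid is a pointed set $(M,* )$ with an action satisfying $1m=m$, $a(bm)=(ab)m$, $0m=*$. Coherent sheaves on $\mathbb A^1$ are $\widetilde M$ with $M$ a finitely generated $\langle t\rangle$-module, and the restriction of $\widetilde M$ to $U$ is $\widetilde{M_t}$, where $M_t$ is the localization at powers of $t$. $\mathcal F$ indecomposable means non-zero and not a direct sum (wedge sum) of two non-zero coherent sheaves. The graph $\Gamma_M$ has vertex set $M\setminus\{*\}$ and an edge $m\to tm$ whenever $tm\ne *$. $\Gamma_M$ is of type 1 if it is a rooted tree (underlying undirected graph a tree with a unique root, i.e. vertex without outgoing edge, reached by a directed path from every vertex); of type 2 if obtained from a finite rooted tree by joining its root to the initial vertex of an infinite directed ray $v_0\to v_1\to\cdots$; of type 3 if obtained from an oriented directed cycle by attaching rooted trees to it. $\mathcal{L}=\widetilde{\langle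 t,t^{-1}\rangle}$ and $\mathcal{C}_k=\widetilde{C_k}$ where $C_k=\{*,1,t,\dots,t^{k-1}\}$ with $t$ acting by the cyclic permutation $1\mapsto t\mapsto\cdots\mapsto t^{k-1}\mapsto1$. *)

(* Defs.v *)
From Stdlib Require Import Arith ZArith List Lia Relations Eqdep_dec Bool.
Import ListNotations.

(** The monoid <t> = {0,1,t,t^2,...}: [None] is 0, [Some n] is t^n. *)
Definition tmon := option nat.
Definition tmul (a b : tmon) : tmon :=
  match a, b with Some n, Some m => Some (n + m) | _, _ => None end.

(** The monoid <t,t^-1> = {0} U {t^n : n in Z}: [None] is 0, [Some z] is t^z. *)
Definition tpmon := option Z.
Definition tpmul (a b : tpmon) : tpmon :=
  match a, b with Some n, Some m => Some (n + m)%Z | _, _ => None end.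

Record tModule := {
  tcar :> Type;
  tpt : tcar;
  tact : tmon -> tcar -> tcar;
  tact1 : forall m, tact (Some 0) m = m;
  tactM : forall a b m, tact a (tact b m) = tact (tmul a b) m;
  tact0 : forall m, tact None m = tpt }.

Record tpModule := {
  tpcar :> Type;
  tppt : tpcar;
  tpact : tpmon -> tpcar -> tpcar;
  tpact1 : forall m, tpact (Some 0%Z) m = m;
  tpactM : forall a b m, tpact a (tpact b m) = tpact (tpmul a b) m;
  tpact0 : forall m, tpact None m = tppt }.

Section ModDefs.
Variable M : tModule.

Definition tshift (m : M) : M := tact M (Some 1) m.

Definition fin_gen : Prop :=
  exists s : list M, forall m : M, exists g a, In g s /\ m = tact M a g.

Definition is_submodule (A : M -> Prop) : Prop :=
  A (tpt M) /\ forall a m, A m -> A (tact M a m).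

Definition decomposable : Prop :=
  exists A B : M -> Prop,
    is_submodule A /\ is_submodule B /\
    (forall m, A m -> B m -> m = tpt M) /\
    (forall m, A m \/ B m) /\
    (exists m, A m /\ m <> tpt M) /\ (exists m, B m /\ m <> tpt M).

Definition indecomposable : Prop :=
  (exists m : M, m <> tpt M) /\ ~ decomposable.

(** ---- The graph Gamma_M: vertices M \ {*}, edges m -> t m when t m <> * ---- *)

Fixpoint chain (R : M -> M -> Prop) (x : M) (l : list M) : Prop :=
  match l with [] => True | y :: l' => R x y /\ chain R y l' end.

(** Subgraph with vertex set S and root r: its edges are u -> t u for u in S,
    u <> r (the root has no outgoing edge in the subgraph). *)
Definition sub_edge (S : M -> Prop) (r u v : M) : Prop :=
  S u /\ u <> r /\ tshift u = v.

Definition sub_uadj (S : M -> Prop) (r u v : M) : Prop :=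
  u <> v /\ (sub_edge S r u v \/ sub_edge S r v u).

Definition undirected_tree (S : M -> Prop) (r : M) : Prop :=
  (forall u v, S u -> S v -> clos_refl_trans M (sub_uadj S r) u v) /\
  (forall v0 l, NoDup (v0 :: l) -> 2 <= length l ->
     chain (sub_uadj S r) v0 l -> sub_uadj S r (last l v0) v0 -> False).

Definition rooted_tree (S : M -> Prop) (r : M) : Prop :=
  S r /\
  (forall u, S u -> u <> tpt M) /\
  (forall u, S u -> u <> r -> S (tshift u)) /\
  (forall u, S u -> exists n, tact M (Some n) u = r /\
                              forall i, i <= n -> S (tact M (Some i) u)) /\
  undirected_tree S r.

Definition gamma_type1 : Prop :=
  exists r, rooted_tree (fun u => u <> tpt M) r /\ tshift r = tpt M.

(** type 2: a finite rooted tree T with root r, joined to the initial vertex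
    of an infinite directed ray v 0 -> v 1 -> ... *)
Definition gamma_type2 : Prop :=
  exists (v : nat -> M) (T : M -> Prop) (r : M),
    (forall i, v i <> tpt M) /\
    (forall i j, v i = v j -> i = j) /\
    (forall i, tshift (v i) = v (S i)) /\
    rooted_tree T r /\
    (exists s : list M, forall u, T u -> In u s) /\
    tshift r = v 0 /\
    (forall u i, T u -> u <> v i) /\
    (forall u, u <> tpt M -> T u \/ exists i, u = v i).

(** type 3 with cycle length k: an oriented cycle c 0 -> ... -> c (k-1) -> c 0
    with rooted trees T j attached at the cycle vertices c j. *)
Definition gamma_type3 (k : nat) : Prop :=
  0 < k /\
  exists (c : nat -> M) (T : nat -> M -> Prop),
    (forall i, i < k -> c i <> tpt M) /\
    (forall i j, i < k -> j < k -> c i = c j -> i = j) /\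
    (forall i, i < k -> tshift (c i) = c (S i mod k)) /\
    (forall j, j < k -> rooted_tree (T j) (c j)) /\
    (forall i j u, i < k -> j < k -> T i u -> T j u -> i = j) /\
    (forall i j, i < k -> j < k -> T j (c i) -> i = j) /\
    (forall u, u <> tpt M -> exists j, j < k /\ T j u).

(** ---- Localization M_t: pairs (m, n) standing for m / t^n ---- *)
Definition loc_eq (x y : M * nat) : Prop :=
  exists a, tact M (Some (a + snd y)) (fst x) = tact M (Some (a + snd x)) (fst y).

Definition loc_act (z : tpmon) (x : M * nat) : M * nat :=
  match z with
  | None => (tpt M, 0)
  | Some z => if (0 <=? z)%Z then (tact M (Some (Z.to_nat z)) (fst x), snd x)
              else (fst x, snd x + Z.to_nat (- z))
  end.

(** M_t (the quotient of M * nat by loc_eq, with action loc_act) is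
    isomorphic to the <t,t^-1>-module N: there is a map out of M * nat whose
    fibres are exactly the loc_eq-classes, which is onto and equivariant. *)
Definition loc_iso (N : tpModule) : Prop :=
  exists phi : M * nat -> N,
    (forall x y, phi x = phi y <-> loc_eq x y) /\
    (forall y, exists x, phi x = y) /\
    (forall a x, phi (loc_act a x) = tpact N a (phi x)).

End ModDefs.

Definition zeroMod : tpModule.
Proof.
  refine {| tpcar := unit; tppt := Datatypes.tt; tpact := fun _ _ => Datatypes.tt |}.
  - intros []; reflexivity.
  - reflexivity.
  - reflexivity.
Defined.

(** L-tilde: <t,t^-1> acting on itself; [Some n] is t^n, [None] is 0 *)
Definition Lact (a : tpmon) (m : option Z) : option Z := tpmul a m.

Definition LMod : tpModule.
Proof.
  refine {| tpcar := option Z; tppt := None; tpact := Lact |}.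
  - intros [m|]; simpl; reflexivity.
  - intros [a|] [b|] [m|]; simpl; try reflexivity. f_equal; lia.
  - reflexivity.
Defined.

(** C_k = {*, 1, t, ..., t^(k-1)}, t acting by cyclic permutation;
    [Some i] is t^i (i < k). *)
Definition ck_idx (k : nat) := { i : nat | (i <? k) = true }.

Lemma ck_mod_lt (k n : nat) (z : Z) :
  (n <? k) = true -> (Z.to_nat ((Z.of_nat n + z) mod Z.of_nat k) <? k) = true.
Proof.
  intro H. apply Nat.ltb_lt in H. apply Nat.ltb_lt.
  assert (Hk : (0 < Z.of_nat k)%Z) by lia.
  pose proof (Z.mod_pos_bound (Z.of_nat n + z) (Z.of_nat k) Hk). lia.
Qed.

Definition ck_shift (k : nat) (z : Z) (i : ck_idx k) : ck_idx k :=
  exist _ (Z.to_nat ((Z.of_nat (proj1_sig i) + z) mod Z.of_nat k))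
        (ck_mod_lt k (proj1_sig i) z (proj2_sig i)).

Definition Cact (k : nat) (a : tpmon) (m : option (ck_idx k)) : option (ck_idx k) :=
  match a, m with Some z, Some i => Some (ck_shift k z i) | _, _ => None end.

Lemma ck_eq (k : nat) (i j : ck_idx k) : proj1_sig i = proj1_sig j -> i = j.
Proof.
  destruct i as [i Hi], j as [j Hj]; simpl; intros ->.
  f_equal. apply UIP_dec. exact bool_dec.
Qed.

Definition CMod (k : nat) : tpModule.
Proof.
  refine {| tpcar := option (ck_idx k); tppt := None; tpact := Cact k |}.
  - intros [[i Hi]|]; simpl; [|reflexivity]. f_equal. apply ck_eq; simpl.
    apply Nat.ltb_lt in Hi. rewrite Z.add_0_r, Z.mod_small by lia. lia.
  - intros [a|] [b|] [[i Hi]|]; simpl; try reflexivity. f_equal. apply ck_eq; simpl.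
    apply Nat.ltb_lt in Hi.
    assert (Hk : (0 < Z.of_nat k)%Z) by lia.
    pose proof (Z.mod_pos_bound (Z.of_nat i + b) (Z.of_nat k) Hk).
    rewrite Z2Nat.id by lia. rewrite Z.add_mod_idemp_l by lia. f_equal. f_equal. lia.
  - reflexivity.
Defined.

(* Main.v *)
Require Import Defs.
From Stdlib Require Import Arith ZArith List.
From Stdlib Require Import Lia Classical ClassicalEpsilon.

Lemma tact_pt (M : tModule) a : tact M a (tpt M) = tpt M.
Proof. rewrite <- (tact0 M (tpt M)) at 1. rewrite tactM. destruct a; simpl; apply tact0. Qed.

Lemma tactS (M : tModule) i j (m : M) :
  tact M (Some i) (tact M (Some j) m) = tact M (Some (i+j)) m.
Proof. rewrite tactM. reflexivity. Qed.

Lemma tshift_eq (M : tModule) j (m : M) : tshift M (tact M (Some j) m) = tact M (Some (S j)) m.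
Proof. unfold tshift. rewrite tactM. reflexivity. Qed.

Lemma tpact_pt (N : tpModule) a : tpact N a (tppt N) = tppt N.
Proof. rewrite <- (tpact0 N (tppt N)) at 1. rewrite tpactM. destruct a; simpl; apply tpact0. Qed.

Lemma tpact_congr (N : tpModule) z1 z2 (x : N) : z1 = z2 -> tpact N (Some z1) x = tpact N (Some z2) x.
Proof. intros ->; reflexivity. Qed.

Lemma gen_iso (M : tModule) (N : tpModule) (psi : M -> N) :
  psi (tpt M) = tppt N ->
  (forall j m, psi (tact M (Some j) m) = tpact N (Some (Z.of_nat j)) (psi m)) ->
  (forall x y, psi x = psi y -> exists a, tact M (Some a) x = tact M (Some a) y) ->
  (forall y, exists m n, y = tpact N (Some (- Z.of_nat n)%Z) (psi m)) ->
  loc_iso M N.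
Proof.
  intros H0 Hh Hi Hs.
  exists (fun x => tpact N (Some (- Z.of_nat (snd x))%Z) (psi (fst x))).
  split; [|split].
  - intros [m n] [m' n']; simpl; split.
    + intro E.
      assert (E' : psi (tact M (Some n') m) = psi (tact M (Some n) m')).
      { rewrite !Hh.
        apply (f_equal (tpact N (Some (Z.of_nat n + Z.of_nat n')%Z))) in E.
        rewrite !tpactM in E. simpl in E.
        match type of E with ?L = ?R => transitivity L; [apply tpact_congr; lia|];
          transitivity R; [exact E| apply tpact_congr; lia] end. }
      destruct (Hi _ _ E') as [a Ha]. exists a.
      rewrite !tactS in Ha. exact Ha.
    + intros [a Ha]. simpl in Ha.
      apply (f_equal psi) in Ha. rewrite !Hh in Ha.
      apply (f_equal (tpact N (Some (- Z.of_nat (a + n + n'))%Z))) in Ha.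
      rewrite !tpactM in Ha. simpl in Ha.
      match type of Ha with ?L = ?R => transitivity L; [apply tpact_congr; lia|];
          transitivity R; [exact Ha| apply tpact_congr; lia] end.
  - intro y. destruct (Hs y) as [m [n E]]. exists (m, n). simpl. symmetry; exact E.
  - intros [z|] [m n]; simpl.
    + destruct (0 <=? z)%Z eqn:Ez; simpl.
      * apply Z.leb_le in Ez. rewrite Hh, !tpactM. simpl. apply tpact_congr. lia.
      * apply Z.leb_gt in Ez. rewrite tpactM. simpl. apply tpact_congr. lia.
    + rewrite H0, tpact_pt, tpact0. reflexivity.
Qed.

Lemma type1_iso (M : tModule) : gamma_type1 M -> loc_iso M zeroMod.
Proof.
  intros [r [[Hr [Hnz [Hcl [Hreach Htree]]]] Htr]].
  assert (Hnil : forall x, exists a, tact M (Some a) x = tpt M).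
  { intro x. destruct (classic (x = tpt M)) as [->|Hx].
    - exists 0. apply tact1.
    - destruct (Hreach x Hx) as [n [Hn _]]. exists (S n).
      rewrite <- tshift_eq, Hn. exact Htr. }
  apply (gen_iso M zeroMod (fun _ => Datatypes.tt)); try reflexivity.
  - intros x y _. destruct (Hnil x) as [a Ha], (Hnil y) as [b Hb].
    exists (a + b).
    rewrite Nat.add_comm at 1. rewrite <- tactS, Ha, tact_pt.
    rewrite <- tactS, Hb, tact_pt. reflexivity.
  - intro y. destruct y. exists (tpt M), 0. reflexivity.
Qed.

Lemma ray_lemma (M : tModule) (v : nat -> M) :
  (forall i, tshift M (v i) = v (S i)) -> forall j i, tact M (Some j) (v i) = v (i + j).
Proof.
  intros Hs j; induction j; intro i.
  - rewrite tact1, Nat.add_0_r; reflexivity.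
  - rewrite <- tshift_eq, IHj, Hs. f_equal; lia.
Qed.

Lemma type2_iso (M : tModule) : gamma_type2 M -> loc_iso M LMod.
Proof.
  intros [v [T [r [Hv [Hinj [Hs [Hrt [_ [Hrv [_ Hcov]]]]]]]]]].
  destruct Hrt as [_ [_ [_ [Hreach _]]]].
  pose proof (ray_lemma M v Hs) as Hray.
  assert (Hrch : forall m, m <> tpt M -> exists k i, tact M (Some k) m = v i).
  { intros m Hm. destruct (Hcov m Hm) as [HT | [i ->]].
    - destruct (Hreach m HT) as [n [Hn _]]. exists (S n), 0.
      rewrite <- tshift_eq, Hn. exact Hrv.
    - exists 0, i. apply tact1. }
  assert (Hnz : forall m j, m <> tpt M -> tact M (Some j) m <> tpt M).
  { intros m j Hm E. destruct (Hrch m Hm) as [k [i Hk]].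
    destruct (Nat.le_gt_cases j k).
    - apply (Hv i). rewrite <- Hk. replace k with ((k - j) + j) by lia.
      rewrite <- tactS, E. apply tact_pt.
    - apply (Hv (i + (j - k))). rewrite <- Hray, <- Hk, tactS.
      replace (j - k + k) with j by lia. exact E. }
  pose (P := fun m (p : nat * nat) => tact M (Some (fst p)) m = v (snd p)).
  pose (eps := fun m => epsilon (inhabits (0,0)) (P m)).
  pose (h := fun m => (Z.of_nat (snd (eps m)) - Z.of_nat (fst (eps m)))%Z).
  assert (Hh : forall m k i, tact M (Some k) m = v i -> h m = (Z.of_nat i - Z.of_nat k)%Z).
  { intros m k i Hk. unfold h.
    assert (Hex : exists p, P m p) by (exists (k,i); exact Hk).
    pose proof (epsilon_spec (inhabits (0,0)) (P m) Hex) as Hp.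
    fold (eps m) in Hp.
    destruct (eps m) as [k' i']. unfold P in Hp; simpl in *.
    destruct (Nat.le_ge_cases k k').
    - assert (i' = i + (k' - k)).
      { apply Hinj. rewrite <- Hp, <- Hray, <- Hk, tactS. f_equal. f_equal. lia. }
      lia.
    - assert (i = i' + (k - k')).
      { apply Hinj. rewrite <- Hk, <- Hray, <- Hp, tactS. f_equal. f_equal. lia. }
      lia. }
  pose (psi := fun m : M => if excluded_middle_informative (m = tpt M) then (None : LMod)
                            else (Some (h m) : LMod)).
  apply (gen_iso M LMod psi).
  - unfold psi. destruct (excluded_middle_informative (tpt M = tpt M)); [reflexivity|contradiction].
  - intros j m. unfold psi. destruct (excluded_middle_informative (m = tpt M)) as [->|Hm].
    + rewrite tact_pt. destruct (excluded_middle_informative (tpt M = tpt M)); [reflexivity|contradiction].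
    + destruct (excluded_middle_informative (tact M (Some j) m = tpt M)) as [E|_].
      * exfalso; exact (Hnz m j Hm E).
      * simpl. f_equal.
        destruct (Hrch m Hm) as [k [i Hk]]. rewrite (Hh m k i Hk).
        rewrite (Hh _ k (i+j)). lia.
        rewrite tactS, Nat.add_comm, <- tactS, Hk. apply Hray.
  - intros x y. unfold psi.
    destruct (excluded_middle_informative (x = tpt M)) as [Ex|Hx];
    destruct (excluded_middle_informative (y = tpt M)) as [Ey|Hy]; intro E; try discriminate.
    + exists 0. rewrite Ex, Ey. reflexivity.
    + injection E as E. destruct (Hrch x Hx) as [kx [ix Hkx]], (Hrch y Hy) as [ky [iy Hky]].
      rewrite (Hh _ _ _ Hkx), (Hh _ _ _ Hky) in E.
      exists (kx + ky).
      assert (A : tact M (Some (kx+ky)) x = v (ix+ky))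
        by (rewrite Nat.add_comm, <- tactS, Hkx; apply Hray).
      assert (B : tact M (Some (kx+ky)) y = v (iy+kx))
        by (rewrite <- tactS, Hky; apply Hray).
      rewrite A, B. f_equal. lia.
  - intros [z|].
    + destruct (Z_le_gt_dec 0 z).
      * exists (v (Z.to_nat z)), 0. unfold psi.
        destruct (excluded_middle_informative (v (Z.to_nat z) = tpt M)) as [E|_];
          [exfalso; exact (Hv _ E)|].
        rewrite (Hh _ 0 (Z.to_nat z)) by apply tact1. simpl. f_equal. lia.
      * exists (v 0), (Z.to_nat (-z)). unfold psi.
        destruct (excluded_middle_informative (v 0 = tpt M)) as [E|_];
          [exfalso; exact (Hv _ E)|].
        rewrite (Hh _ 0 0) by apply tact1. simpl. f_equal. lia.
    + exists (tpt M), 0. unfold psi.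
      destruct (excluded_middle_informative (tpt M = tpt M)); [reflexivity|contradiction].
Qed.

Lemma cycle_lemma (M : tModule) (k : nat) (c : nat -> M) :
  0 < k -> (forall i, i < k -> tshift M (c i) = c (S i mod k)) ->
  forall l j, j < k -> tact M (Some l) (c j) = c ((j + l) mod k).
Proof.
  intros Hk Hcs l; induction l; intros j Hj.
  - rewrite tact1, Nat.add_0_r, Nat.mod_small by exact Hj. reflexivity.
  - rewrite <- tshift_eq, IHl by exact Hj.
    rewrite Hcs by (apply Nat.mod_upper_bound; lia).
    f_equal. rewrite <- Nat.add_1_r, Nat.Div0.add_mod_idemp_l. f_equal; lia.
Qed.

Lemma type3_iso (M : tModule) (k : nat) : gamma_type3 M k -> loc_iso M (CMod k).
Proof.
  intros [Hk [c [T [Hc [Hinj [Hcs [Hrt [_ [_ Hcov]]]]]]]]].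
  pose proof (cycle_lemma M k c Hk Hcs) as Hcyc.
  assert (Hk0 : k <> 0) by lia.
  assert (HkZ : (0 < Z.of_nat k)%Z) by lia.
  assert (Hrch : forall m, m <> tpt M -> exists n j, j < k /\ tact M (Some n) m = c j).
  { intros m Hm. destruct (Hcov m Hm) as [j [Hj HT]].
    destruct (Hrt j Hj) as [_ [_ [_ [Hreach _]]]].
    destruct (Hreach m HT) as [n [Hn _]]. exists n, j. split; assumption. }
  assert (Hnz : forall m l, m <> tpt M -> tact M (Some l) m <> tpt M).
  { intros m l Hm E. destruct (Hrch m Hm) as [n [j [Hj Hn]]].
    destruct (Nat.le_gt_cases l n).
    - apply (Hc j Hj). rewrite <- Hn. replace n with ((n - l) + l) by lia.
      rewrite <- tactS, E. apply tact_pt.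
    - apply (Hc ((j + (l - n)) mod k)). apply Nat.mod_upper_bound; lia.
      rewrite <- Hcyc, <- Hn, tactS by exact Hj.
      replace (l - n + n) with l by lia. exact E. }
  pose (P := fun m (p : nat * nat) => tact M (Some (fst p)) m = c (snd p) /\ snd p < k).
  pose (eps := fun m => epsilon (inhabits (0,0)) (P m)).
  pose (g := fun m => ((Z.of_nat (snd (eps m)) - Z.of_nat (fst (eps m))) mod Z.of_nat k)%Z).
  assert (Hg : forall m n j, j < k -> tact M (Some n) m = c j ->
                 g m = ((Z.of_nat j - Z.of_nat n) mod Z.of_nat k)%Z).
  { intros m n j Hj Hn. unfold g.
    assert (Hex : exists p, P m p) by (exists (n,j); split; assumption).
    pose proof (epsilon_spec (inhabits (0,0)) (P m) Hex) as Hp.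
    fold (eps m) in Hp.
    destruct (eps m) as [n' j']. unfold P in Hp; simpl in *. destruct Hp as [Hp Hj'].
    destruct (Nat.le_ge_cases n n').
    - assert (j' = (j + (n' - n)) mod k).
      { apply Hinj; auto. apply Nat.mod_upper_bound; lia.
        rewrite <- Hp, <- Hcyc, <- Hn, tactS by exact Hj. f_equal. f_equal. lia. }
      subst j'. rewrite Nat2Z.inj_mod, Zminus_mod_idemp_l. f_equal. lia.
    - assert (j = (j' + (n - n')) mod k).
      { apply Hinj; auto. apply Nat.mod_upper_bound; lia.
        rewrite <- Hn, <- Hcyc, <- Hp, tactS by exact Hj'. f_equal. f_equal. lia. }
      subst j. rewrite Nat2Z.inj_mod, Zminus_mod_idemp_l. f_equal. lia. }
  assert (Hgb : forall m, (0 <= g m < Z.of_nat k)%Z) by (intro m; apply Z.mod_pos_bound; lia).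
  assert (Hglt : forall m, (Z.to_nat (g m) <? k) = true).
  { intro m. apply Nat.ltb_lt. specialize (Hgb m). lia. }
  pose (psi := fun m : M => if excluded_middle_informative (m = tpt M) then (None : CMod k)
                            else (Some (exist _ (Z.to_nat (g m)) (Hglt m)) : CMod k)).
  apply (gen_iso M (CMod k) psi).
  - unfold psi. destruct (excluded_middle_informative (tpt M = tpt M)); [reflexivity|contradiction].
  - intros l m. unfold psi. destruct (excluded_middle_informative (m = tpt M)) as [->|Hm].
    + rewrite tact_pt. destruct (excluded_middle_informative (tpt M = tpt M)); [reflexivity|contradiction].
    + destruct (excluded_middle_informative (tact M (Some l) m = tpt M)) as [E|_].
      * exfalso; exact (Hnz m l Hm E).
      * simpl. f_equal. apply ck_eq. simpl.
        destruct (Hrch m Hm) as [n [j [Hj Hn]]].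
        rewrite (Hg m n j Hj Hn).
        rewrite (Hg _ n ((j + l) mod k)).
        -- rewrite Z2Nat.id by (apply Z.mod_pos_bound; lia).
           rewrite Nat2Z.inj_mod, Zminus_mod_idemp_l, Zplus_mod_idemp_l. f_equal. f_equal. lia.
        -- apply Nat.mod_upper_bound; lia.
        -- rewrite tactS, Nat.add_comm, <- tactS, Hn. apply Hcyc; exact Hj.
  - intros x y. unfold psi.
    destruct (excluded_middle_informative (x = tpt M)) as [Ex|Hx];
    destruct (excluded_middle_informative (y = tpt M)) as [Ey|Hy]; intro E; try discriminate.
    + exists 0. rewrite Ex, Ey. reflexivity.
    + apply (f_equal (fun o : option (ck_idx k) => match o with Some i => proj1_sig i | None => 0 end)) in E.
      simpl in E.
      assert (E' : g x = g y) by (pose proof (Hgb x); pose proof (Hgb y); lia).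
      destruct (Hrch x Hx) as [nx [jx [Hjx Hkx]]], (Hrch y Hy) as [ny [jy [Hjy Hky]]].
      rewrite (Hg _ _ _ Hjx Hkx), (Hg _ _ _ Hjy Hky) in E'.
      exists (nx + ny).
      assert (A : tact M (Some (nx+ny)) x = c ((jx+ny) mod k))
        by (rewrite Nat.add_comm, <- tactS, Hkx; apply Hcyc; exact Hjx).
      assert (B : tact M (Some (nx+ny)) y = c ((jy+nx) mod k))
        by (rewrite <- tactS, Hky; apply Hcyc; exact Hjy).
      rewrite A, B. f_equal. apply Nat2Z.inj. rewrite !Nat2Z.inj_mod, !Nat2Z.inj_add.
      replace (Z.of_nat jx + Z.of_nat ny)%Z with ((Z.of_nat jx - Z.of_nat nx) + (Z.of_nat nx + Z.of_nat ny))%Z by lia.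
      replace (Z.of_nat jy + Z.of_nat nx)%Z with ((Z.of_nat jy - Z.of_nat ny) + (Z.of_nat nx + Z.of_nat ny))%Z by lia.
      rewrite (Z.add_mod (Z.of_nat jx - Z.of_nat nx)), (Z.add_mod (Z.of_nat jy - Z.of_nat ny)), E' by lia.
      reflexivity.
  - intros [[i Hi]|].
    + assert (Hik : i < k) by (apply Nat.ltb_lt; exact Hi).
      exists (c i), 0. unfold psi.
      destruct (excluded_middle_informative (c i = tpt M)) as [E|_];
        [exfalso; exact (Hc _ Hik E)|].
      simpl. f_equal. apply ck_eq. simpl.
      rewrite (Hg (c i) 0 i Hik) by apply tact1.
      rewrite (Z.mod_small (Z.of_nat i - Z.of_nat 0)) by lia.
      rewrite (Z.mod_small) by lia. lia.
    + exists (tpt M), 0. unfold psi.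
      destruct (excluded_middle_informative (tpt M = tpt M)); [reflexivity|contradiction].
Qed.

Theorem mainTheorem11 (M : tModule) :
  fin_gen M -> indecomposable M ->
  (gamma_type1 M -> loc_iso M zeroMod) /\
  (gamma_type2 M -> loc_iso M LMod) /\
  (forall k : nat, gamma_type3 M k -> loc_iso M (CMod k)).
Proof.
  intros _ _. split; [apply type1_iso|split; [apply type2_iso|intro k; apply type3_iso]].
Qed.
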